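(* Let $1\le d<N$, let $w\in I_{d,N}$ with $w\ne(1,\dots,d)$, and let $T\subseteq GL_N$ be the maximal torus of diagonal matrices, so that $(w,d,N,T)$ is a stable Levi–Schubert quadruple. Let $(\overline w,\overline d,\overline N,\overline T)$ be its reduction. Then $(w,d,N,T)$ is spherical (i.e. $X(w)$ has a dense open $T$-orbit) if and only if $\overline w=(\overline N)$ (with $\overline d=1$) or $\overline d\ge2$ and $\overline w=(2,3,\dots,\overline d,\overline N)$.
   Context: Work over $\mathbb{C}$. $G_{d,N}$ is the Grassmannian of $d$-planes in $\mathbb{C}^N$; $B\subset GL_N$ upper triangular, $T\subset B$ the diagonal matrices. $I_{d,N}$ is the set of sequences $(i_1<\dots<i_d)$ in $\{1,\dots,N\}$. For $w=(\ell_1,\dots,\ell_d)\in I_{d,N}$, $X(w)$ is the closure of $B\cdot[e_{\ell_1}\wedge\dots\wedge e_{\ell_d}]$. A Levi–Schubert quadruple $(w,d,N,L)$ with $L$ a standard (block diagonal) Levi subgroup of $GL_N$ is stable if $X(w)$ is $L$-stable under left multiplication, and then spherical if $X(w)$ has a dense open orbit of a Borel subgroup of $L$; $T$ is the Levi with all blocks of size $1$. Reduction: let $p\ge0$ be maximal with $\ell_i=i$ for $i\le p$; then $\overline w=(\ell_{p+1}-p,\dots,\ell_d-p)$, $\overline d=d-p$, $\overline N=\ell_d-p$, and $\overline T$ is the diagonal torus of $GL_{\overline N}$ (image of $T$ under taking the principal submatrix on rows and columns $p+1,\dots,\ell_d$). *)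

(* Defs.v *)
From HB Require Import structures.
From mathcomp Require Import all_boot all_order all_algebra.
Set Implicit Arguments. Unset Strict Implicit. Unset Printing Implicit Defensive.
Import Order.TTheory GRing.Theory Num.Theory.
Local Open Scope ring_scope.

Inductive pexpr (V F : Type) : Type :=
| PConst of F
| PVar of V
| PAdd of pexpr V F & pexpr V F
| PMul of pexpr V F & pexpr V F.

Fixpoint peval (R : pzRingType) (V : Type) (x : V -> R) (p : pexpr V R) : R :=
  match p with
  | PConst c => c
  | PVar v => x v
  | PAdd p q => peval x p + peval x q
  | PMul p q => peval x p * peval x q
  end.

(* ---------- The Grassmannian G_{d,N} ----------
   A point of G_{d,N} (a d-plane V in F^N) is represented by a d x N matrix
   of rank d whose rows form a basis of V; two matrices represent the same
   point iff they have the same row space. *)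
Definition gr_pt (F : fieldType) (d N : nat) (A : 'M[F]_(d, N)) : Prop :=
  row_free A.

Definition same_pt (F : fieldType) (d N : nat) (A B : 'M[F]_(d, N)) : Prop :=
  (A == B)%MS.

Definition pluecker (F : fieldType) (d N : nat) (A : 'M[F]_(d, N))
  (f : {ffun 'I_d -> 'I_N}) : F := \det (colsub f A).

(* Zariski topology on G_{d,N} induced by the Pluecker embedding into
   projective space: a point lies in the zero locus of a family S of
   polynomials in the Pluecker coordinates iff they vanish at every
   representative (i.e. at every nonzero multiple of its Pluecker vector). *)
Definition vanish (F : fieldType) (d N : nat)
  (S : pexpr {ffun 'I_d -> 'I_N} F -> Prop) (A : 'M[F]_(d, N)) : Prop :=
  forall p, S p -> forall B : 'M[F]_(d, N), gr_pt B -> same_pt B A ->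
    peval (pluecker B) p = 0.

Definition gr_closed (F : fieldType) (d N : nat) (Z : 'M[F]_(d, N) -> Prop)
  : Prop :=
  exists S : pexpr {ffun 'I_d -> 'I_N} F -> Prop,
    forall A, gr_pt A -> (Z A <-> vanish S A).

Definition gr_closure (F : fieldType) (d N : nat) (Y : 'M[F]_(d, N) -> Prop)
  (A : 'M[F]_(d, N)) : Prop :=
  gr_pt A /\
  forall Z : 'M[F]_(d, N) -> Prop, gr_closed Z ->
    (forall B, gr_pt B -> Y B -> Z B) -> Z A.

Definition rel_open (F : fieldType) (d N : nat) (X O : 'M[F]_(d, N) -> Prop)
  : Prop :=
  exists Z, gr_closed Z /\ forall A, gr_pt A -> (O A <-> (X A /\ ~ Z A)).

Definition rel_dense (F : fieldType) (d N : nat) (X O : 'M[F]_(d, N) -> Prop)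
  : Prop :=
  forall A, X A -> gr_closure O A.

(* ---------- Groups acting (g . V has basis rows  v_i^T g^T) ---------- *)
Definition upper_tri (F : fieldType) (N : nat) (b : 'M[F]_N) : Prop :=
  forall i j : 'I_N, (j < i)%N -> b i j = 0.

Definition borel_orbit (F : fieldType) (d N : nat) (A : 'M[F]_(d, N))
  (B : 'M[F]_(d, N)) : Prop :=
  gr_pt B /\ exists b : 'M[F]_N,
    upper_tri b /\ b \in unitmx /\ same_pt B (A *m b^T).

Definition torus_orbit (F : fieldType) (d N : nat) (A : 'M[F]_(d, N))
  (B : 'M[F]_(d, N)) : Prop :=
  gr_pt B /\ exists t : 'rV[F]_N,
    (forall i, t 0 i != 0) /\ same_pt B (A *m diag_mx t).

(* w = (l_1 < ... < l_d), entries in {1..N} (1-indexed as in the paper). *)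
Definition in_IdN (d N : nat) (w : seq nat) : Prop :=
  size w = d /\ sorted ltn w /\ all (fun l => (0 < l <= N)%N) w.

Definition schubert_pt (F : fieldType) (d N : nat) (w : seq nat)
  : 'M[F]_(d, N) :=
  \matrix_(j < d, k < N) (((k : nat).+1 == nth 0%N w j)%:R).

Definition schubert (F : fieldType) (d N : nat) (w : seq nat)
  : 'M[F]_(d, N) -> Prop :=
  gr_closure (borel_orbit (@schubert_pt F d N w)).

Definition T_spherical (F : fieldType) (d N : nat) (w : seq nat) : Prop :=
  exists A : 'M[F]_(d, N), @schubert F d N w A /\
    rel_open (@schubert F d N w) (torus_orbit A) /\
    rel_dense (@schubert F d N w) (torus_orbit A).

Definition red_p (w : seq nat) : nat :=
  find (fun i => nth 0%N w i != i.+1) (iota 0 (size w)).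
Definition wbar (w : seq nat) : seq nat :=
  map (fun l => (l - red_p w)%N) (drop (red_p w) w).
Definition dbar (w : seq nat) : nat := (size w - red_p w)%N.
Definition Nbar (w : seq nat) : nat := (last 0%N w - red_p w)%N.

(* Main.v *)
Require Import Defs.
From HB Require Import structures.
From mathcomp Require Import all_boot all_order all_algebra all_fingroup.
From Stdlib Require Import Classical.
From mathcomp Require Import zify ring.
From Stdlib Require Import Lia.
Set Implicit Arguments. Unset Strict Implicit. Unset Printing Implicit Defensive.
Import GRing.Theory.
Local Open Scope ring_scope.

Section Gen.
Variable F : fieldType.

Lemma sp_refl m n (A : 'M[F]_(m, n)) : same_pt A A.
Proof. by apply/eqmxP. Qed.

Lemma sp_sym m n (A B : 'M[F]_(m, n)) : same_pt A B -> same_pt B A.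
Proof. by move/eqmxP=> h; apply/eqmxP; apply: eqmx_sym. Qed.

Lemma sp_trans m n (A B C : 'M[F]_(m, n)) : same_pt A B -> same_pt B C -> same_pt A C.
Proof. by move/eqmxP=> h1 /eqmxP h2; apply/eqmxP; apply: eqmx_trans h1 h2. Qed.

Lemma sp_mul_unit m n (M : 'M[F]_m) (A : 'M[F]_(m, n)) :
  M \in unitmx -> same_pt (M *m A) A.
Proof. by move=> hM; apply/eqmxP; apply: eqmxMfull; rewrite row_full_unit. Qed.

Lemma sp_rep m n (A B : 'M[F]_(m, n)) : same_pt B A -> B = (B *m pinvmx A) *m A.
Proof. by case/andP=> h _; rewrite mulmxKpV. Qed.

Lemma pl_mul m n (M : 'M[F]_m) (A : 'M[F]_(m, n)) f :
  pluecker (M *m A) f = \det M * pluecker A f.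
Proof. by rewrite /pluecker -mulmx_colsub det_mulmx. Qed.

Lemma pl_diag m n (A : 'M[F]_(m, n)) (t : 'rV[F]_n) f :
  pluecker (A *m diag_mx t) f = pluecker A f * \prod_i t 0 (f i).
Proof.
rewrite /pluecker.
have -> : colsub f (A *m diag_mx t) = colsub f A *m diag_mx (\row_i t 0 (f i)).
  by apply/matrixP=> i j; rewrite !mul_mx_diag !mxE.
by rewrite det_mulmx det_diag; congr (_ * _); apply: eq_bigr => i _; rewrite mxE.
Qed.

Lemma rowfree_pl m n (A : 'M[F]_(m, n)) f : pluecker A f != 0 -> row_free A.
Proof.
move=> h; rewrite /row_free eqn_leq rank_leq_row /=.
have hu : colsub f A \in unitmx by rewrite unitmxE unitfE.
have := mxrankM_maxl A (colsub f 1%:M).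
by rewrite mulmx_colsub mulmx1 (mxrank_unit hu).
Qed.

Lemma unit_of_rowfree m n (M : 'M[F]_m) (G : 'M[F]_(m, n)) :
  row_free (M *m G) -> M \in unitmx.
Proof.
move=> h; rewrite -row_free_unit /row_free eqn_leq rank_leq_row /=.
by have := mxrankM_maxl M G; move/eqP: h => ->.
Qed.

Lemma det0_rows n (M : 'M[F]_n) (S : {set 'I_n}) (k : 'I_n) :
  (#|S| <= k)%N -> (forall r : 'I_n, (r <= k)%N -> forall m, m \notin S -> M r m = 0) ->
  \det M = 0.
Proof.
move=> hS hM; rewrite /determinant; apply: big1 => s _.
case: (pickP [pred r : 'I_n | (r <= k)%N && (s r \notin S)]) => [r /andP[rk rS]|none].
  by rewrite (bigD1 r) //= (hM r rk _ rS) mul0r mulr0.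
exfalso.
pose h := fun i : 'I_k.+1 => s (widen_ord (ltn_ord k) i).
have hinj : injective h.
  by move=> i j /perm_inj /(congr1 val) /= ij; apply: val_inj.
have sub : [set h i | i in 'I_k.+1] \subset S.
  apply/subsetP=> x /imsetP[i _ ->].
  have := none (widen_ord (ltn_ord k) i); rewrite /= -ltnS ltn_ord /=.
  by move/negbFE.
have := subset_leq_card sub; rewrite card_imset // card_ord => hc.
by have := leq_trans hc hS; rewrite ltnn.
Qed.

Definition fset d N (f : {ffun 'I_d -> 'I_N}) (k : 'I_d) (c : 'I_N) : {ffun 'I_d -> 'I_N} :=
  [ffun m => if m == k then c else f m].

Lemma cramer d N (B : 'M[F]_(d, N)) (f : {ffun 'I_d -> 'I_N}) k c : colsub f B \in unitmx ->
  (invmx (colsub f B) *m B) k c * pluecker B f = pluecker B (fset f k c).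
Proof.
move=> hu; rewrite /invmx hu -scalemxAl mxE /pluecker.
rewrite mulrC mulrA divff ?mul1r; last by rewrite -unitfE -unitmxE.
rewrite (expand_det_col _ k) mxE; apply: eq_bigr => i _.
rewrite !mxE ffunE eqxx mulrC; congr (_ * _).
rewrite /cofactor; congr (_ * \det _).
apply/matrixP=> a b; rewrite !mxE ffunE eq_sym (negbTE (neq_lift _ _)) //.
Qed.

Lemma pl_fset_one d N (G : 'M[F]_(d, N)) (f : {ffun 'I_d -> 'I_N}) k c : colsub f G = 1%:M ->
  pluecker G (fset f k c) = G k c.
Proof.
move=> h; rewrite -cramer h ?unitmx1 // invmx1 mul1mx /pluecker h det1 mulr1 //.
Qed.

End Gen.
Section Poly.
Variable F : fieldType.

Definition ispoly (phi : F -> F) := exists Q : {poly F}, forall z, phi z = Q.[z].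

Lemma ispoly_ext phi psi : (forall z, phi z = psi z) -> ispoly psi -> ispoly phi.
Proof. by move=> h [Q hQ]; exists Q => z; rewrite h hQ. Qed.

Lemma ispoly_const c : ispoly (fun _ => c).
Proof. by exists c%:P => z; rewrite hornerC. Qed.

Lemma ispoly_id : ispoly (fun z => z).
Proof. by exists 'X => z; rewrite hornerX. Qed.

Lemma ispolyD phi psi : ispoly phi -> ispoly psi -> ispoly (fun z => phi z + psi z).
Proof. by move=> [P hP] [Q hQ]; exists (P + Q) => z; rewrite hornerD hP hQ. Qed.

Lemma ispolyM phi psi : ispoly phi -> ispoly psi -> ispoly (fun z => phi z * psi z).
Proof. by move=> [P hP] [Q hQ]; exists (P * Q) => z; rewrite hornerM hP hQ. Qed.

Lemma ispoly_sum I (r : seq I) (P : pred I) (phi : I -> F -> F) :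
  (forall i, ispoly (phi i)) -> ispoly (fun z => \sum_(i <- r | P i) phi i z).
Proof.
move=> h; elim: r => [|a r IH].
  by apply: (ispoly_ext (psi := fun _ => 0)); [move=> z; rewrite big_nil|apply: ispoly_const].
case Pa: (P a).
  apply: (ispoly_ext (psi := fun z => phi a z + \sum_(i <- r | P i) phi i z)).
    by move=> z; rewrite big_cons Pa.
  exact: ispolyD.
by apply: (ispoly_ext _ IH) => z; rewrite big_cons Pa.
Qed.

Lemma ispoly_prod I (r : seq I) (P : pred I) (phi : I -> F -> F) :
  (forall i, ispoly (phi i)) -> ispoly (fun z => \prod_(i <- r | P i) phi i z).
Proof.
move=> h; elim: r => [|a r IH].
  by apply: (ispoly_ext (psi := fun _ => 1)); [move=> z; rewrite big_nil|apply: ispoly_const].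
case Pa: (P a).
  apply: (ispoly_ext (psi := fun z => phi a z * \prod_(i <- r | P i) phi i z)).
    by move=> z; rewrite big_cons Pa.
  exact: ispolyM.
by apply: (ispoly_ext _ IH) => z; rewrite big_cons Pa.
Qed.

Lemma ispoly_det n (M : F -> 'M[F]_n) : (forall i j, ispoly (fun z => M z i j)) ->
  ispoly (fun z => \det (M z)).
Proof.
move=> h; rewrite /determinant.
apply: ispoly_sum => s; apply: ispolyM; first exact: ispoly_const.
by apply: ispoly_prod => i; apply: h.
Qed.

Lemma ispoly_peval V (x : F -> V -> F) (p : pexpr V F) :
  (forall v, ispoly (fun z => x z v)) -> ispoly (fun z => peval (x z) p).
Proof.
move=> h; elim: p => [c|v|p IHp q IHq|p IHp q IHq] /=.
- exact: ispoly_const.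
- exact: h.
- exact: ispolyD.
- exact: ispolyM.
Qed.

Lemma poly_char0 (hF : [pchar F] =i pred0) (Q : {poly F}) :
  (forall z, z != 0 -> Q.[z] = 0) -> Q = 0.
Proof.
move=> h; apply/eqP; apply: contraT => nz.
have c0 : forall n : nat, (n%:R == 0 :> F) = (n == 0%N) by apply/pcharf0P.
have key : forall a b : nat, (a <= b)%N -> (a%:R = b%:R :> F) -> a = b.
  move=> a b ab e; have : ((b - a)%:R == 0 :> F) by rewrite natrB // e subrr.
  by rewrite c0 subn_eq0 => ba; apply/eqP; rewrite eqn_leq ab ba.
have inj : injective (fun n : nat => n.+1%:R : F).
  move=> a b /= e; case: (leqP a b) => ab.
    by have := key a.+1 b.+1 ab e => -[].
  by have := key b.+1 a.+1 (ltnW ab) (esym e) => -[].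
have := max_poly_roots nz (rs := [seq n.+1%:R | n <- iota 0 (size Q)]).
rewrite size_map size_iota ltnn; apply.
  by apply/allP=> x /mapP[n _ ->]; rewrite /root h // c0.
by rewrite map_inj_uniq // iota_uniq.
Qed.

End Poly.

Section W.
Variable F : fieldType.
Variables (d N : nat) (w : seq nat).
Hypothesis hw : in_IdN d N w.

Lemma size_w : size w = d. Proof. by case: hw. Qed.
Lemma sorted_w : sorted ltn w. Proof. by case: hw => _ []. Qed.

Lemma l_bounds k : (k < d)%N -> (0 < nth 0%N w k <= N)%N.
Proof.
case: hw => hs [_ ha] hk.
by move/all_nthP: ha; apply; rewrite hs.
Qed.

Lemma l_lt i j : (i < j)%N -> (j < d)%N -> (nth 0%N w i < nth 0%N w j)%N.
Proof.
move=> ij jd; apply: (sorted_ltn_nth ltn_trans 0 sorted_w) => //; rewrite inE size_w //.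
exact: ltn_trans ij jd.
Qed.

Lemma l_le i j : (i <= j)%N -> (j < d)%N -> (nth 0%N w i <= nth 0%N w j)%N.
Proof.
rewrite leq_eqVlt => /orP[/eqP -> //|ij] jd; exact: ltnW (l_lt ij jd).
Qed.

Lemma piv_ok (k : 'I_d) : ((nth 0%N w k).-1 < N)%N.
Proof. by have /andP[a b] := l_bounds (ltn_ord k); rewrite prednK. Qed.

Definition pivot_of (k : 'I_d) : 'I_N := Ordinal (piv_ok k).

Lemma pivS k : (pivot_of k).+1 = nth 0%N w k.
Proof. by have /andP[a b] := l_bounds (ltn_ord k); rewrite /= prednK. Qed.

Lemma piv_lt (i j : 'I_d) : (i < j)%N -> (pivot_of i < pivot_of j)%N.
Proof. by move=> ij; rewrite -ltnS -ltnS !pivS ltnS; apply: l_lt. Qed.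

Lemma piv_le (i j : 'I_d) : (i <= j)%N -> (pivot_of i <= pivot_of j)%N.
Proof. by move=> ij; rewrite -ltnS -ltnS !pivS ltnS; apply: l_le. Qed.

Lemma piv_inj : injective pivot_of.
Proof.
move=> i j e; apply: val_inj; apply/eqP; rewrite eqn_leq.
apply/andP; split; rewrite leqNgt; apply/negP=> h.
  by have := piv_lt h; rewrite e ltnn.
by have := piv_lt h; rewrite e ltnn.
Qed.

Definition is_pivot (c : 'I_N) := [exists m, pivot_of m == c].
Definition f0w : {ffun 'I_d -> 'I_N} := [ffun k => pivot_of k].
Definition cellmx (x : 'M[F]_(d, N)) : 'M[F]_(d, N) :=
  \matrix_(k, c) if is_pivot c then (c == pivot_of k)%:R else x k c.

Lemma ispiv_piv k : is_pivot (pivot_of k).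
Proof. by apply/existsP; exists k. Qed.

Lemma colsub_cell x : colsub f0w (cellmx x) = 1%:M.
Proof.
apply/matrixP=> k m; rewrite !mxE ffunE ispiv_piv.
by rewrite (inj_eq piv_inj) eq_sym.
Qed.

Lemma pl_cell_f0 x : pluecker (cellmx x) f0w = 1.
Proof. by rewrite /pluecker colsub_cell det1. Qed.

Lemma cell_grpt x : gr_pt (cellmx x).
Proof. by apply: (rowfree_pl (f := f0w)); rewrite pl_cell_f0 oner_neq0. Qed.

Lemma G_entry (b : 'M[F]_N) k c : (schubert_pt F d N w *m b^T) k c = b c (pivot_of k).
Proof.
rewrite mxE (bigD1 (pivot_of k)) //= big1 ?addr0.
  by rewrite !mxE pivS eqxx mul1r.
move=> j nj; rewrite !mxE -pivS eqSS.
by case: eqP => [/val_inj e|]; [rewrite e eqxx in nj|rewrite mul0r].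
Qed.

Lemma borel_supp (b : 'M[F]_N) : upper_tri b ->
  forall k (c : 'I_N), (pivot_of k < c)%N -> (schubert_pt F d N w *m b^T) k c = 0.
Proof. by move=> ub k c h; rewrite G_entry ub. Qed.

Lemma upper_diag (b : 'M[F]_N) : upper_tri b -> b \in unitmx -> forall i, b i i != 0.
Proof.
move=> ub hb i.
have tr : is_trig_mx b^T.
  by apply/forallP=> x; apply/forallP=> y; apply/implyP=> xy; rewrite mxE ub.
have : \det b != 0 by rewrite -unitfE -unitmxE.
rewrite -det_tr (det_trig tr) prodf_seq_neq0 => /allP /(_ i (mem_index_enum _)).
by rewrite mxE.
Qed.

Lemma borel_f0 (b : 'M[F]_N) : upper_tri b -> b \in unitmx ->
  pluecker (schubert_pt F d N w *m b^T) f0w != 0.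
Proof.
move=> ub hb.
have tr : is_trig_mx (colsub f0w (schubert_pt F d N w *m b^T)).
  apply/forallP=> x; apply/forallP=> y; apply/implyP=> xy.
  by rewrite mxE ffunE G_entry ub //; apply: piv_lt.
rewrite /pluecker (det_trig tr) prodf_seq_neq0; apply/allP=> i _.
by rewrite mxE ffunE G_entry upper_diag.
Qed.

Lemma borel_cell (x : 'M[F]_(d, N)) : (forall k (c : 'I_N), (pivot_of k < c)%N -> x k c = 0) ->
  borel_orbit (schubert_pt F d N w) (cellmx x).
Proof.
move=> hx; split; first exact: cell_grpt.
pose b : 'M[F]_N := \matrix_(r, c)
  if [pick m | pivot_of m == c] is Some m then cellmx x m r else (r == c)%:R.
have hG : schubert_pt F d N w *m b^T = cellmx x.
  apply/matrixP=> k c; rewrite G_entry mxE.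
  case: pickP => [m /eqP/piv_inj -> //|/(_ k)]; by rewrite eqxx.
have ub : upper_tri b.
  move=> i j ji; rewrite mxE; case: pickP => [m /eqP e|_].
    rewrite mxE; case: ifP => _; last by rewrite hx // e.
    by case: eqP => // ie; move: ji; rewrite ie e ltnn.
  by case: eqP => // ij; move: ji; rewrite ij ltnn.
exists b; split=> //; split; last by rewrite hG; apply: sp_refl.
have tr : is_trig_mx b^T.
  by apply/forallP=> i; apply/forallP=> j; apply/implyP=> ij; rewrite mxE ub.
rewrite unitmxE -det_tr (det_trig tr) unitfE prodf_seq_neq0; apply/allP=> i _.
rewrite !mxE; case: pickP => [m /eqP e|_]; last by rewrite eqxx oner_neq0.
by rewrite mxE -e ispiv_piv eqxx oner_neq0.
Qed.

Definition bad (f : {ffun 'I_d -> 'I_N}) :=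
  exists k : 'I_d, (#|[set m | (f m < nth 0%N w k)%N]| <= k)%N.

Lemma bad_vanish (G : 'M[F]_(d, N)) f :
  (forall k (c : 'I_N), (pivot_of k < c)%N -> G k c = 0) -> bad f -> pluecker G f = 0.
Proof.
move=> hG [k hk]; apply: (det0_rows hk) => r rk m; rewrite inE -leqNgt => hm.
rewrite mxE hG //; rewrite -ltnS pivS.
exact: leq_trans (l_le rk (ltn_ord k)) hm.
Qed.

Definition Sbad (q : pexpr {ffun 'I_d -> 'I_N} F) := exists f, bad f /\ q = PVar F f.

Lemma borel_rep V B : borel_orbit (schubert_pt F d N w) V -> same_pt B V ->
  exists b M, upper_tri b /\ b \in unitmx /\ B = M *m (schubert_pt F d N w *m b^T).
Proof.
move=> [_ [b [ub [hb sV]]]] sB.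
have sBG := sp_trans sB sV.
by exists b, (B *m pinvmx (schubert_pt F d N w *m b^T)); do 2 split => //; apply: sp_rep.
Qed.

Lemma borel_W V : gr_pt V -> borel_orbit (schubert_pt F d N w) V -> vanish Sbad V.
Proof.
move=> _ hV q [f [bf ->]] B _ sB /=.
have [b [M [ub [hb ->]]]] := borel_rep hV sB.
by rewrite pl_mul bad_vanish ?mulr0 //; apply: borel_supp.
Qed.

Lemma X_bad V : @schubert F d N w V -> forall B, gr_pt B -> same_pt B V ->
  forall f, bad f -> pluecker B f = 0.
Proof.
move=> [gV H] B gB sB f bf.
have hv : vanish Sbad V.
  apply: H; first by exists Sbad.
  by move=> A gA hA; apply: borel_W.
exact: (hv (PVar F f) (ex_intro _ f (conj bf erefl)) B gB sB).
Qed.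

Lemma borel_rep_f0 V B : borel_orbit (schubert_pt F d N w) V -> gr_pt B -> same_pt B V ->
  pluecker B f0w != 0.
Proof.
move=> hV gB sB; have [b [M [ub [hb eB]]]] := borel_rep hV sB.
rewrite eB pl_mul mulf_neq0 ?borel_f0 //.
by rewrite -unitfE -unitmxE; apply: (unit_of_rowfree (G := schubert_pt F d N w *m b^T)); rewrite -eB.
Qed.

Lemma normalize (B : 'M[F]_(d, N)) : pluecker B f0w != 0 ->
  let Y := invmx (colsub f0w B) *m B in
  [/\ B = colsub f0w B *m Y, cellmx Y = Y &
      forall k c, Y k c * pluecker B f0w = pluecker B (fset f0w k c)].
Proof.
move=> h Y; have hu : colsub f0w B \in unitmx by rewrite unitmxE unitfE.
split.
- by rewrite /Y mulKVmx.
- apply/matrixP=> k c; rewrite mxE; case: ifP => // /existsP[m /eqP <-].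
  have : colsub f0w Y = 1%:M by rewrite /Y -mulmx_colsub mulVmx.
  move=> e; rewrite (_ : Y k (pivot_of m) = colsub f0w Y k m); last by rewrite [RHS]mxE ffunE.
  by rewrite e !mxE (inj_eq piv_inj) eq_sym.
- by move=> k c; rewrite /Y cramer.
Qed.

End W.

Lemma card_lt n j : (j <= n)%N -> #|[set m : 'I_n | (m < j)%N]| = j.
Proof.
move=> jn.
have -> : [set m : 'I_n | (m < j)%N] = [set widen_ord jn i | i in 'I_j].
  apply/setP=> m; rewrite inE; apply/idP/imsetP.
    by move=> mj; exists (Ordinal mj) => //; apply: val_inj.
  by case=> i _ ->; rewrite /= ltn_ord.
by rewrite card_imset ?card_ord // => a b /(congr1 val) /= e; apply: val_inj.
Qed.

Definition pprod (R : pzRingType) V (l : seq (pexpr V R)) : pexpr V R :=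
  foldr (@PMul V R) (PConst V 1) l.

Lemma peval_pprod (R : pzRingType) V (x : V -> R) l :
  peval x (pprod l) = \prod_(q <- l) peval x q.
Proof. by elim: l => [|a l IH] /=; rewrite ?big_nil ?big_cons ?IH. Qed.

Lemma peval_ext (R : pzRingType) V (x x' : V -> R) q :
  (forall v, x v = x' v) -> peval x q = peval x' q.
Proof. by move=> h; elim: q => //= [p1 -> p2 ->|p1 -> p2 ->]. Qed.

Lemma borel_in_X (F : fieldType) d N w (V : 'M[F]_(d, N)) :
  borel_orbit (schubert_pt F d N w) V -> schubert w V.
Proof. by move=> hV; split; [case: hV | move=> Z _ H; apply: H => //; case: hV]. Qed.

Lemma borel_diag (F : fieldType) d N (S A V : 'M[F]_(d, N)) (t : 'rV[F]_N) :
  borel_orbit S A -> (forall i, t 0 i != 0) -> gr_pt V -> same_pt V (A *m diag_mx t) ->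
  borel_orbit S V.
Proof.
move=> [_ [b [ub [hb sA]]]] tnz gV sV; split=> //.
exists (diag_mx t *m b); split.
  by move=> i j ji; rewrite mul_diag_mx mxE ub ?mulr0.
split.
  rewrite unitmx_mul hb andbT unitmxE det_diag unitfE prodf_seq_neq0.
  by apply/allP=> i _; rewrite tnz.
apply: (sp_trans sV); rewrite trmx_mul tr_diag_mx mulmxA.
by case/andP: sA => h1 h2; apply/andP; split; apply: submxMr.
Qed.

Section C.
Variable F : fieldType.
Variables (d N : nat) (w : seq nat) (p : nat).
Hypothesis hw : in_IdN d N w.
Hypothesis hdN : (d < N)%N.
Hypothesis hpd : (p < d)%N.
Hypothesis hlow : forall k, (k < p)%N -> nth 0%N w k = k.+1.
Hypothesis hmid : forall k, (p <= k)%N -> (k.+1 < d)%N -> nth 0%N w k = k.+2.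
Hypothesis hL : (d < nth 0%N w d.-1)%N.

Local Notation L := (nth 0%N w d.-1).
Local Notation piv := (pivot_of hw).
Local Notation ispiv := (is_pivot hw).

Lemma d_pos : (0 < d)%N. Proof. exact: leq_ltn_trans (leq0n p) hpd. Qed.

Lemma pivE (k : 'I_d) : (piv k : nat) =
  if (k < p)%N then (k : nat) else if (k.+1 < d)%N then k.+1 else L.-1.
Proof.
rewrite /piv /pivot_of /=; case: ifP => [kp|kp]; first by rewrite hlow.
case: ifP => [kd|kd]; first by rewrite hmid // leqNgt kp.
have -> : (k : nat) = d.-1 by apply/eqP; rewrite eqn_leq -ltnS prednK ?ltn_ord ?d_pos //= -ltnS prednK ?d_pos // leqNgt kd.
by [].
Qed.

Lemma L_le : (L <= N)%N.
Proof. have h : (d.-1 < d)%N by have := d_pos; lia. by have /andP[] := l_bounds hw h. Qed.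

Lemma ispivE (c : 'I_N) : ispiv c = [|| (c < p)%N, (p < c < d)%N | (c == L.-1 :> nat)].
Proof.
apply/existsP/idP => [[m /eqP <-]|].
  rewrite  pivE; case: ifP => [->//|mp]; case: ifP => [md|md].
    by apply/orP; right; apply/orP; left; apply/andP; split; lia.
  by rewrite eqxx !orbT.
have d0 := d_pos.
have key : forall m : 'I_d, (piv m : nat) = c -> exists x, pivot_of hw x == c.
  by move=> m e; exists m; apply/eqP; apply: val_inj.
case/or3P=> h.
- have hd' : (c < d)%N by lia.
  by apply: (key (Ordinal hd')); rewrite pivE /= h.
- have hd' : (c.-1 < d)%N by lia.
  apply: (key (Ordinal hd')); rewrite pivE /=.
  case: ifP => h1; first by lia.
  case: ifP => h2; lia.
- have hd' : (d.-1 < d)%N by lia.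
  apply: (key (Ordinal hd')); rewrite pivE /=.
  case: ifP => h1; first by lia.
  case: ifP => h2; lia.
Qed.

Definition Free (k : 'I_d) (c : 'I_N) :=
  (p <= k)%N && ((c == p :> nat) || ((k == d.-1 :> nat) && (d <= c < L.-1)%N)).

Lemma Free_np k c : Free k c -> ~~ ispiv c.
Proof. by rewrite ispivE /Free; have := hL; have := hpd; lia. Qed.

Lemma Free_lt k c : Free k c -> (c < piv k)%N.
Proof.
have := hL; have := hpd; have := ltn_ord k; rewrite /Free pivE.
by case: ifP => h1; [|case: ifP => h2]; lia.
Qed.

Lemma bad_of_sub (f : {ffun 'I_d -> 'I_N}) (kk : 'I_d) (S : {set 'I_d}) :
  (forall m, (f m < nth 0%N w kk)%N -> m \in S) -> (#|S| <= kk)%N -> bad w f.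
Proof.
move=> hS hc; exists kk; apply: leq_trans hc; apply: subset_leq_card.
by apply/subsetP=> m; rewrite inE; apply: hS.
Qed.

Definition lowset (j : nat) := [set m : 'I_d | (m < j)%N].

Lemma card_lowset j : (j <= d)%N -> #|lowset j| = j.
Proof. exact: card_lt. Qed.

Lemma cardD1_lt (j : nat) (k : 'I_d) : (j <= d)%N -> (k < j)%N ->
  #|lowset j :\ k| = j.-1.
Proof.
move=> jd kj; have := cardsD1 k (lowset j); rewrite /lowset.
by rewrite inE kj card_lt // => /= e; lia.
Qed.

Lemma cover k c : ~~ ispiv c -> ~~ Free k c -> bad w (fset (f0w hw) k c).
Proof.
move=> np nf; move: np nf; rewrite ispivE /Free => np nf.
have hL' := hL; have hpd' := hpd; have kd := ltn_ord k.
have pivm : forall m : 'I_d, (m <= piv m)%N.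
  by move=> m; rewrite pivE; have := ltn_ord m; case: ifP => h1; [|case: ifP => h2]; lia.
case: (ltnP k p) => kp.
- have hk : (p.-1 < d)%N by lia.
  apply: (@bad_of_sub _ (Ordinal hk) (lowset p :\ k)).
    move=> m; rewrite /= hlow; last by lia.
    rewrite ffunE !inE; case: eqP => [-> | /eqP mk]; first by lia.
    by have := pivm m; rewrite /f0w ffunE  /=; lia.
  by rewrite cardD1_lt // ltnW.
case: (ltnP k.+1 d) => kd1.
- have hk : (d.-2 < d)%N by lia.
  apply: (@bad_of_sub _ (Ordinal hk) (lowset d.-1 :\ k)).
    move=> m; rewrite /= hmid; [|lia|lia].
    rewrite ffunE !inE; case: eqP => [-> | /eqP mk]; first by lia.
    rewrite /f0w ffunE  pivE; have := ltn_ord m; case: ifP => h1; [|case: ifP => h2]; lia.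
  by rewrite cardD1_lt //=; lia.
- have hk : (d.-1 < d)%N by lia.
  apply: (@bad_of_sub _ (Ordinal hk) (lowset d.-1)).
    move=> m; rewrite /= .
    rewrite ffunE !inE; case: eqP => [-> | /eqP mk]; first by lia.
    by move=> _; move: mk; rewrite -val_eqE /=; have := ltn_ord m; lia.
  by rewrite card_lowset /=; lia.
Qed.

Definition xA : 'M[F]_(d, N) := \matrix_(k, c) (Free k c)%:R.
Definition Amx := cellmx hw xA.

Lemma p_np (c : 'I_N) : (c : nat) = p -> ~~ ispiv c.
Proof. by move=> e; rewrite ispivE e; have := hL; have := hpd; lia. Qed.

Lemma T_cell (y : 'M[F]_(d, N)) :
  (forall k c, Free k c -> y k c != 0) ->
  (forall k c, ~~ ispiv c -> ~~ Free k c -> y k c = 0) ->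
  exists (tt : 'rV[F]_N) (dd : 'rV[F]_d), [/\ (forall i, tt 0 i != 0), (forall i, dd 0 i != 0) &
    cellmx hw y = diag_mx dd *m (Amx *m diag_mx tt)].
Proof.
move=> ynz y0.
have hpN : (p < N)%N by exact: ltn_trans hpd hdN.
have hdl : (d.-1 < d)%N by have := hpd; lia.
pose cp : 'I_N := Ordinal hpN.
pose dl : 'I_d := Ordinal hdl.
pose tfun (c : 'I_N) : F :=
  if (c == p :> nat) then 1
  else if [pick m | (piv m == c) && (p <= m)%N] is Some m then (y m cp)^-1
  else if (d <= c < L.-1)%N then y dl c / y dl cp else 1.
have Fcp : forall k : 'I_d, (p <= k)%N -> Free k cp by move=> k pk; rewrite /Free pk eqxx.
have Fdl : forall c : 'I_N, (d <= c < L.-1)%N -> Free dl c.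
  by move=> c h; rewrite /Free /= h eqxx !andbT orbT; have := hpd; lia.
have tnz : forall c, tfun c != 0.
  move=> c; rewrite /tfun; case: ifP => _; first exact: oner_neq0.
  case: pickP => [m /andP[_ pm]|_]; first by rewrite invr_eq0 ynz ?Fcp.
  case: ifP => h; last exact: oner_neq0.
  by rewrite mulf_neq0 ?invr_eq0 // ynz //; [exact: Fdl | apply: Fcp => /=; have := hpd; lia].
exists (\row_c tfun c), (\row_k (tfun (piv k))^-1).
split; first by move=> i; rewrite mxE tnz.
  by move=> i; rewrite mxE invr_eq0 tnz.
apply/matrixP=> k c; rewrite mul_diag_mx mul_mx_diag !mxE.
case: ifP => pc.
  case: eqP => [->|_]; last by rewrite mul0r mulr0.
  by rewrite mul1r mulVf ?tnz.
case fk: (Free k c); last by rewrite /= mul0r mulr0; apply: y0; rewrite ?fk ?pc.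
rewrite /= mul1r.
have pk : (p <= k)%N by case/andP: fk.
have -> : tfun (piv k) = (y k cp)^-1.
  rewrite /tfun; case: ifP => [/eqP e|_]; first by move: (p_np e); rewrite ispiv_piv.
  case: pickP => [m /andP[/eqP e _]|none]; first by rewrite (piv_inj e).
  by have := none k; rewrite eqxx pk.
rewrite invrK /tfun; case: ifP => [/eqP e|ncp].
  by rewrite mulr1; congr (y k _); apply: val_inj.
case: pickP => [m /andP[/eqP e _]|_].
  by move: pc; rewrite -e /ispiv /is_pivot; case: existsP => // -[]; exists m.
move: fk; rewrite /Free ncp /= => /andP[_ /andP[/eqP kd h]].
rewrite h.
have -> : k = dl by apply: val_inj.
by rewrite mulrCA divff ?mulr1 // ynz ?Fcp //=; have := hpd; lia.
Qed.

Definition supp (y : 'M[F]_(d, N)) := forall k c, ~~ ispiv c -> ~~ Free k c -> y k c = 0.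

Definition phiv (cst : F) (q : pexpr {ffun 'I_d -> 'I_N} F) (y : 'M[F]_(d, N)) :=
  peval (fun g => cst * pluecker (cellmx hw y) g) q.

Definition Zs (y : 'M[F]_(d, N)) := [set kc : 'I_d * 'I_N | Free kc.1 kc.2 && (y kc.1 kc.2 == 0)].

Lemma ext_zero (hF : [pchar F] =i pred0) cst q :
  (forall y, supp y -> (forall k c, Free k c -> y k c != 0) -> phiv cst q y = 0) ->
  forall y, supp y -> phiv cst q y = 0.
Proof.
move=> H.
suff: forall n y, (#|Zs y| <= n)%N -> supp y -> phiv cst q y = 0.
  by move=> h y; apply: (h #|Zs y|).
elim=> [|n IH] y hn hs.
  apply: H => // k c fkc; apply/negP => /eqP y0.
  have : (k, c) \in Zs y by rewrite inE /= fkc y0 eqxx.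
  by rewrite (cards0_eq (_ : #|Zs y| = 0%N)) ?inE //; apply/eqP; rewrite -leqn0.
case: (set_0Vmem (Zs y)) => [e|[[k0 c0] hin]].
  apply: H => // k c fkc; apply/negP => /eqP y0.
  have : (k, c) \in Zs y by rewrite inE /= fkc y0 eqxx.
  by rewrite e inE.
have [f0c0 /eqP y00] : Free k0 c0 /\ y k0 c0 == 0 by move: hin; rewrite inE => /andP.
pose upd (z : F) : 'M[F]_(d, N) := \matrix_(k, c) if (k == k0) && (c == c0) then z else y k c.
have hz : forall z, z != 0 -> phiv cst q (upd z) = 0.
  move=> z z0; apply: IH.
    have sub : Zs (upd z) \subset Zs y :\ (k0, c0).
      apply/subsetP=> [[k c]]; rewrite !inE /= mxE.
      case: ifP => [/andP[/eqP -> /eqP ->] /andP[_ /eqP zz]|kc]; first by rewrite zz eqxx in z0.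
      move=> ->; rewrite andbT; apply/negP => /eqP [ek ec].
      by rewrite ek ec !eqxx in kc.
    have := subset_leq_card sub; have := cardsD1 (k0, c0) (Zs y); rewrite hin.
    by move=> e1 e2; have := hn; lia.
  move=> k c np nf; rewrite mxE; case: ifP => [/andP[/eqP ek /eqP ec]|_]; last exact: hs.
  by move: nf; rewrite ek ec f0c0.
have [Q hQ] : ispoly (fun z => phiv cst q (upd z)).
  apply: ispoly_peval => g; apply: ispolyM; first exact: ispoly_const.
  apply: ispoly_det => i j.
  apply: (ispoly_ext (psi := fun z => if ispiv (g j) then ((g j == piv i)%:R : F)
                         else if (i == k0) && (g j == c0) then z else y i (g j))).
    by move=> z; rewrite !mxE; case: ifP.
  case: (is_pivot hw (g j)); first exact: ispoly_const.
  case: ((i == k0) && (g j == c0)); [exact: ispoly_id | exact: ispoly_const].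
have Q0 : Q = 0 by apply: poly_char0 => // z z0; rewrite -hQ hz.
have -> : y = upd 0.
  apply/matrixP=> k c; rewrite mxE; case: ifP => // /andP[/eqP -> /eqP ->].
  by rewrite y00.
by rewrite hQ Q0 horner0.
Qed.

Lemma Amx_borel : borel_orbit (schubert_pt F d N w) Amx.
Proof.
apply: borel_cell => k c h; rewrite mxE; case fk: (Free k c) => //.
by have := Free_lt fk; lia.
Qed.

Lemma pl_Amx_free k c : Free k c -> pluecker Amx (fset (f0w hw) k c) = 1.
Proof.
move=> fk; rewrite pl_fset_one ?colsub_cell //.
by rewrite mxE (negbTE (Free_np fk)) mxE fk.
Qed.

Definition Pprod : pexpr {ffun 'I_d -> 'I_N} F :=
  PMul (PVar F (f0w hw))
    (pprod [seq PVar F (fset (f0w hw) kc.1 kc.2) | kc <- enum [pred kc : 'I_d * 'I_N | Free kc.1 kc.2]]).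

Lemma Pprod_neq0 (B : 'M[F]_(d, N)) : peval (pluecker B) Pprod != 0 <->
  pluecker B (f0w hw) != 0 /\ forall k c, Free k c -> pluecker B (fset (f0w hw) k c) != 0.
Proof.
rewrite /= peval_pprod big_map mulf_eq0 negb_or prodf_seq_neq0; split.
  case/andP=> h1 /allP h2; split=> // k c fk.
  by have := h2 (k, c); rewrite mem_enum inE /= fk; apply.
case=> h1 h2; rewrite h1 /=; apply/allP => -[k c]; rewrite mem_enum inE /= => fk.
exact: h2.
Qed.

Lemma torus_in_X V : torus_orbit Amx V -> schubert w V.
Proof.
case=> gV [t [tnz sV]]; apply: borel_in_X; apply: (borel_diag Amx_borel tnz gV sV).
Qed.

Lemma torus_pt_gr (t : 'rV[F]_N) : (forall i, t 0 i != 0) -> gr_pt (Amx *m diag_mx t).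
Proof.
move=> tnz; apply: (rowfree_pl (f := f0w hw)).
rewrite pl_diag /Amx pl_cell_f0 mul1r prodf_seq_neq0; apply/allP=> i _; exact: tnz.
Qed.

Lemma Y_supp (B : 'M[F]_(d, N)) V : schubert w V -> gr_pt B -> same_pt B V ->
  pluecker B (f0w hw) != 0 ->
  supp (invmx (colsub (f0w hw) B) *m B).
Proof.
move=> XV gB sB h k c np nf.
have [_ _ hc] := normalize h.
have := hc k c; rewrite (X_bad hw XV gB sB (cover np nf)).
by move/eqP; rewrite mulf_eq0 (negbTE h) orbF => /eqP.
Qed.

Lemma pos_spherical (hF : [pchar F] =i pred0) : T_spherical F d N w.
Proof.
exists Amx; split; first exact: borel_in_X Amx_borel.
split.
  exists (vanish (fun q => q = Pprod)); split; first by exists (fun q => q = Pprod).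
  move=> V gV; split.
    move=> TV; split; first exact: torus_in_X.
    case: TV => _ [t [tnz sV]] hvan.
    have := hvan Pprod erefl (Amx *m diag_mx t) (torus_pt_gr tnz) (sp_sym sV).
    apply/eqP; apply/Pprod_neq0; split.
      by rewrite pl_diag /Amx pl_cell_f0 mul1r prodf_seq_neq0; apply/allP=> i _; exact: tnz.
    move=> k c fk; rewrite pl_diag pl_Amx_free // mul1r prodf_seq_neq0.
    by apply/allP=> i _; exact: tnz.
  case=> XV nvan.
  have [B [gB [sB hB]]] : exists B, gr_pt B /\ same_pt B V /\ peval (pluecker B) Pprod != 0.
    apply: NNPP => hno; apply: nvan => q -> B gB sB; apply/eqP; apply: contraT => hne.
    by exfalso; apply: hno; exists B.
  have [h0 hfree] := proj1 (Pprod_neq0 B) hB.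
  have [eB cY hc] := normalize h0.
  set Y := invmx (colsub (f0w hw) B) *m B in eB cY hc.
  have sY : supp Y := Y_supp XV gB sB h0.
  have Ynz : forall k c, Free k c -> Y k c != 0.
    by move=> k c fk; have := hc k c; move=> e; apply/eqP=> y0; move: e; rewrite y0 mul0r => /esym/eqP; rewrite (negbTE (hfree k c fk)).
  have [tt [dd [tnz dnz eY]]] := T_cell Ynz sY.
  split=> //; exists tt; split=> //.
  apply: (sp_trans (sp_sym sB)); rewrite eB.
  have hu : colsub (f0w hw) B \in unitmx by rewrite unitmxE unitfE.
  apply: (sp_trans (sp_mul_unit _ hu)); rewrite -cY eY.
  apply: sp_mul_unit; rewrite unitmxE det_diag unitfE prodf_seq_neq0.
  by apply/allP=> i _; exact: dnz.
move=> V XV; split; first by case: XV.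
move=> Z [S hZ] hO.
case: XV => gV HX; apply: HX; first by exists S.
move=> V' gV' bV'; apply/(hZ _ gV') => q hq B gB sB.
have XV' := borel_in_X bV'.
have h0 := borel_rep_f0 hw bV' gB sB.
have [eB cY hc] := normalize h0.
set Y := invmx (colsub (f0w hw) B) *m B in eB cY hc.
have sY : supp Y := Y_supp XV' gB sB h0.
rewrite (peval_ext (x' := fun g => pluecker B (f0w hw) * pluecker (cellmx hw Y) g)); last first.
  by move=> g; rewrite {1}eB pl_mul cY.
apply: (ext_zero hF) => // y sy ynz.
set cst := pluecker B (f0w hw).
have [tt [dd [tnz dnz ey]]] := T_cell ynz sy.
have hi0 : (0 < d)%N := d_pos.
pose i0 : 'I_d := Ordinal hi0.
pose cr : 'rV[F]_d := \row_i (if i == i0 then cst else 1).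
have dcr : \det (diag_mx cr) = cst.
  rewrite det_diag (bigD1 i0) //= big1 ?mulr1; first by rewrite mxE eqxx.
  by move=> i /negbTE ni; rewrite mxE ni.
pose R := diag_mx cr *m cellmx hw y.
have plR : forall g, pluecker R g = cst * pluecker (cellmx hw y) g by move=> g; rewrite pl_mul dcr.
have gR : gr_pt R by apply: (rowfree_pl (f := f0w hw)); rewrite plR pl_cell_f0 mulr1.
have OT : torus_orbit Amx (Amx *m diag_mx tt).
  by split; [exact: torus_pt_gr | exists tt; split=> //; apply: sp_refl].
have ZT := hO _ (torus_pt_gr tnz) OT.
have := (proj1 (hZ _ (torus_pt_gr tnz)) ZT) q hq R gR.
rewrite (peval_ext (x' := fun g => cst * pluecker (cellmx hw y) g)) //; apply.
rewrite /R ey mulmxA; apply: sp_mul_unit.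
rewrite unitmx_mul !unitmxE !det_diag !unitfE !prodf_seq_neq0.
apply/andP; split; apply/allP=> i _ //=; rewrite ?dnz //.
by rewrite mxE; case: ifP => _; rewrite ?oner_neq0 // /cst h0.
Qed.

End C.

Section Neg.
Variable F : fieldType.
Variables (d N : nat) (w : seq nat).
Hypothesis hw : in_IdN d N w.
Local Notation piv := (pivot_of hw).
Local Notation ispiv := (is_pivot hw).
Local Notation f0 := (f0w hw).

Lemma prod_fset (t : 'rV[F]_N) k c :
  \prod_m t 0 (fset f0 k c m) = t 0 c * \prod_(m | m != k) t 0 (f0 m).
Proof.
rewrite (bigD1 k) //= ffunE eqxx; congr (_ * _).
by apply: eq_bigr => m /negbTE mk; rewrite ffunE mk.
Qed.

Lemma dens_vanish (A : 'M[F]_(d, N)) q :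
  rel_dense (schubert w) (torus_orbit A) ->
  (forall (B : 'M[F]_(d, N)) (t : 'rV[F]_N), gr_pt B -> (forall i, t 0 i != 0) -> same_pt B (A *m diag_mx t) ->
     peval (pluecker B) q = 0) ->
  forall V, schubert w V -> peval (pluecker V) q = 0.
Proof.
move=> dens H V XV.
have [gV HV] := dens V XV.
have : vanish (fun r => r = q) V.
  apply: HV; first by exists (fun r => r = q).
  move=> B gB [_ [t [tnz sB]]] r -> B' gB' sB'.
  exact: (H B' t gB' tnz (sp_trans sB' sB)).
by move/(_ q erefl V gV (sp_refl V)).
Qed.

Lemma neg_spherical (i j : 'I_d) (a b : 'I_N) : (i < j)%N -> a != b ->
  ~~ ispiv a -> ~~ ispiv b -> (a < piv i)%N -> (b < piv i)%N -> ~ T_spherical F d N w.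
Proof.
move=> ij ab npa npb ai bi [A [XA [_ dens]]].
have nij : i != j by rewrite -val_eqE /= neq_ltn ij.
pose f1 := fset f0 i a; pose f2 := fset f0 j b; pose f3 := fset f0 i b; pose f4 := fset f0 j a.
pose u : pexpr {ffun 'I_d -> 'I_N} F := PMul (PVar F f1) (PVar F f2).
pose v : pexpr {ffun 'I_d -> 'I_N} F := PMul (PVar F f3) (PVar F f4).
pose uA := pluecker A f1 * pluecker A f2.
pose vA := pluecker A f3 * pluecker A f4.
have torus : forall (B : 'M[F]_(d, N)) (t : 'rV[F]_N), gr_pt B -> (forall i, t 0 i != 0) -> same_pt B (A *m diag_mx t) ->
   exists K, peval (pluecker B) u = K * uA /\ peval (pluecker B) v = K * vA.
  move=> B t gB tnz sB.
  set M := B *m pinvmx (A *m diag_mx t).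
  have eB : B = M *m (A *m diag_mx t) by apply: sp_rep.
  exists (\det M ^+ 2 * (t 0 a * t 0 b * (\prod_(m | m != i) t 0 (f0 m)) * (\prod_(m | m != j) t 0 (f0 m)))).
  rewrite /= eB !pl_mul !pl_diag !prod_fset /uA /vA; split; ring.
pose x1 : 'M[F]_(d, N) := \matrix_(k, c) (((k == i) && (c == a))%:R + ((k == j) && (c == b))%:R).
pose x2 : 'M[F]_(d, N) := \matrix_(k, c) (((k == i) && (c == b))%:R + ((k == j) && (c == a))%:R).
have hx : forall (x : 'M[F]_(d, N)) (a' b' : 'I_N), (a' < piv i)%N -> (b' < piv i)%N ->
    x = \matrix_(k, c) (((k == i) && (c == a'))%:R + ((k == j) && (c == b'))%:R) ->
    schubert w (cellmx hw x).
  move=> x a' b' ha hb ->; apply: borel_in_X; apply: borel_cell => k c kc.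
  have e1 : ((k == i) && (c == a')) = false.
    by apply/negbTE/negP => /andP[/eqP ki /eqP ca]; move: kc; rewrite ki ca; lia.
  have e2 : ((k == j) && (c == b')) = false.
    apply/negbTE/negP => /andP[/eqP kj /eqP cb]; move: kc; rewrite kj cb.
    by have := piv_le hw (ltnW ij); lia.
  by rewrite mxE e1 e2 addr0.
have X1 : schubert w (cellmx hw x1) by apply: (hx _ a b).
have X2 : schubert w (cellmx hw x2) by apply: (hx _ b a).
have ent : forall (x : 'M[F]_(d, N)) k c, ~~ ispiv c -> pluecker (cellmx hw x) (fset f0 k c) = x k c.
  by move=> x k c np; rewrite pl_fset_one ?colsub_cell // mxE (negbTE np).
have nba : b != a by rewrite eq_sym.
have nij' : (i == j) = false by apply/negbTE.
have nji : (j == i) = false by rewrite eq_sym; apply/negbTE.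
have ab' : (a == b) = false by apply/negbTE.
have ba' : (b == a) = false by apply/negbTE.
have u1 : peval (pluecker (cellmx hw x1)) u = 1.
  by rewrite /= !ent // !mxE !eqxx nij' nji /= !addr0 !add0r mulr1.
have v1 : peval (pluecker (cellmx hw x1)) v = 0.
  by rewrite /= !ent // !mxE !eqxx nij' nji ab' ba' /= !addr0 mulr0.
have u2 : peval (pluecker (cellmx hw x2)) u = 0.
  by rewrite /= !ent // !mxE !eqxx nij' nji ab' ba' /= !addr0 mulr0.
have v2 : peval (pluecker (cellmx hw x2)) v = 1.
  by rewrite /= !ent // !mxE !eqxx nij' nji /= !addr0 !add0r mulr1.
pose q := PAdd (PMul (PConst _ uA) v) (PMul (PConst _ (- vA)) u).
have hq : forall V, schubert w V -> peval (pluecker V) q = 0.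
  apply: (dens_vanish dens) => B t gB tnz sB.
  have [K [eu ev]] := torus B t gB tnz sB.
  by move: eu ev; rewrite /= => -> ->; ring.
have vA0 : vA = 0.
  by have := hq _ X1; move: u1 v1; rewrite /= => -> ->; rewrite mulr0 mulr1 add0r => /eqP; rewrite oppr_eq0 => /eqP.
have uA0 : uA = 0.
  by have := hq _ X2; move: u2 v2; rewrite /= => -> ->; rewrite mulr0 mulr1 addr0.
have := dens_vanish dens (q := u) _ X1.
rewrite u1 => h; have : (1 : F) = 0; last by move/eqP; rewrite oner_eq0.
apply: h => B t gB tnz sB.
by have [K [eu _]] := torus B t gB tnz sB; rewrite eu uA0 mulr0.
Qed.

End Neg.

Local Close Scope ring_scope.

Section Comb.
Variables (d N : nat) (w : seq nat).
Hypothesis hw : in_IdN d N w.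
Hypothesis hne : w <> iota 1 d.

Local Notation p := (red_p w).

Lemma l_ge k : (k < d)%N -> (k < nth 0%N w k)%N.
Proof.
elim: k => [|k IH] h; first by have /andP[] := l_bounds hw h.
have := l_lt hw (ltnSn k) h; have := IH (ltnW h); lia.
Qed.

Lemma l_gap i j : (i <= j)%N -> (j < d)%N -> (nth 0%N w i + (j - i) <= nth 0%N w j)%N.
Proof.
elim: j => [|j IH] ij jd.
  by move: ij; rewrite leqn0 => /eqP ->; lia.
case: (ltnP i j.+1) => h.
  have h1 : (i <= j)%N by lia.
  have := IH h1 (ltnW jd); have := l_lt hw (ltnSn j) jd; lia.
have e : i = j.+1 by lia.
by rewrite e subnn addn0.
Qed.

Lemma p_le : (p <= d)%N.
Proof. by rewrite /red_p -(size_w hw) -{2}(size_iota 0 (size w)) find_size. Qed.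

Lemma red_low k : (k < p)%N -> nth 0%N w k = k.+1.
Proof.
move=> kp; have kd : (k < size w)%N by rewrite (size_w hw); exact: leq_trans kp p_le.
have := before_find 0%N kp; rewrite nth_iota ?add0n; last by rewrite (size_w hw) (leq_trans kp p_le).
by move/negbFE/eqP.
Qed.

Lemma red_lt : (p < d)%N.
Proof.
rewrite ltnNge; apply/negP => h; apply: hne.
apply: (@eq_from_nth _ 0%N); first by rewrite size_iota (size_w hw).
move=> k; rewrite (size_w hw) => kd.
by rewrite nth_iota // red_low ?add1n //; exact: leq_trans kd h.
Qed.

Lemma red_p_neq : nth 0%N w p != p.+1.
Proof.
have hs : has (fun i => nth 0%N w i != i.+1) (iota 0 (size w)).
  by rewrite has_find size_iota; have := red_lt; rewrite -(size_w hw).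
have := nth_find 0%N hs; rewrite nth_iota ?add0n //.
by have := red_lt; rewrite -(size_w hw).
Qed.

Lemma red_p_ge : (p.+2 <= nth 0%N w p)%N.
Proof. have := l_ge red_lt; have := red_p_neq; lia. Qed.

Definition Cond := forall k, (p <= k)%N -> (k.+1 < d)%N -> nth 0%N w k = k.+2.

Lemma nth_wbar m : (m < d - p)%N -> nth 0%N (wbar w) m = (nth 0%N w (p + m) - p)%N.
Proof.
move=> h; rewrite /wbar (nth_map 0%N); last by rewrite size_drop (size_w hw).
by rewrite nth_drop.
Qed.

Lemma size_wbar : size (wbar w) = (d - p)%N.
Proof. by rewrite /wbar size_map size_drop (size_w hw). Qed.

Lemma Nbar_E : Nbar w = (nth 0%N w d.-1 - p)%N.
Proof. by rewrite /Nbar -nth_last (size_w hw). Qed.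

Lemma dbar_E : dbar w = (d - p)%N.
Proof. by rewrite /dbar (size_w hw). Qed.

Lemma cond_listed : Cond ->
  (wbar w = [:: Nbar w] \/ ((2 <= dbar w)%N /\ wbar w = iota 2 (dbar w).-1 ++ [:: Nbar w])).
Proof.
move=> hC; have hp := red_lt.
have E : wbar w = iota 2 (dbar w).-1 ++ [:: Nbar w].
  apply: (@eq_from_nth _ 0%N).
    by rewrite size_wbar size_cat size_iota dbar_E /=; lia.
  move=> m; rewrite size_wbar => hm; rewrite nth_wbar // nth_cat size_iota dbar_E.
  case: ifP => h1.
    by rewrite nth_iota // hC; lia.
  have -> : (m - (d - p).-1)%N = 0%N by lia.
  by rewrite /= Nbar_E; congr (nth _ _ _ - _)%N; lia.
case: (ltnP 1 (dbar w)) => h.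
  by right; split.
by left; rewrite E; have -> : (dbar w).-1 = 0%N by rewrite dbar_E in h *; lia.
Qed.

Lemma listed_cond :
  (wbar w = [:: Nbar w] \/ ((2 <= dbar w)%N /\ wbar w = iota 2 (dbar w).-1 ++ [:: Nbar w])) -> Cond.
Proof.
have hp := red_lt.
case=> [E|[h2 E]] k pk kd.
  by have := size_wbar; rewrite E /=; lia.
have hm : (k - p < d - p)%N by lia.
have := nth_wbar hm; rewrite E nth_cat size_iota dbar_E.
have -> : (k - p < (d - p).-1)%N by lia.
rewrite nth_iota; last by lia.
have -> : (p + (k - p))%N = k by lia.
lia.
Qed.

Lemma cond_L : Cond -> (d < nth 0%N w d.-1)%N.
Proof.
move=> hC; have hp := red_lt; have hg := red_p_ge.
case: (ltnP p.+1 d) => h.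
  have h1 : (p <= d.-2)%N by lia.
  have h2 : (d.-2.+1 < d)%N by lia.
  have e := hC d.-2 h1 h2.
  have h3 : (d.-2 < d.-1)%N by lia.
  have h4 : (d.-1 < d)%N by lia.
  have := l_lt hw h3 h4; rewrite e; lia.
have -> : d.-1 = p by lia.
lia.
Qed.

Lemma notcond_gap : ~ Cond -> (1 < d)%N /\ (d < nth 0%N w d.-2)%N.
Proof.
move=> nC.
have [k [pk kd nk]] : exists k, [/\ (p <= k)%N, (k.+1 < d)%N & nth 0%N w k <> k.+2].
  apply: NNPP => hn; apply: nC => k pk kd; apply: NNPP => nk; apply: hn; exists k; split=> //.
have hg : (k.+2 <= nth 0%N w k)%N.
  have := l_gap pk (ltnW kd); have := red_p_ge; lia.
have h1 : (k <= d.-2)%N by lia.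
have h2 : (d.-2 < d)%N by lia.
have := l_gap h1 h2; split; lia.
Qed.

End Comb.

Lemma two_nonpiv d N w (hw : in_IdN d N w) (i : 'I_d) :
  (1 < d)%N -> (i : nat) = d.-2 -> (d < nth 0%N w i)%N ->
  exists a b : 'I_N, [/\ a != b, ~~ is_pivot hw a, ~~ is_pivot hw b, (a < pivot_of hw i)%N & (b < pivot_of hw i)%N].
Proof.
move=> d1 ei hi.
pose S := [set c : 'I_N | (c < pivot_of hw i)%N && ~~ is_pivot hw c].
pose P := [set pivot_of hw m | m in [set m : 'I_d | (m < i)%N]].
have sub : [set c : 'I_N | (c < pivot_of hw i)%N] \subset S :|: P.
  apply/subsetP=> c; rewrite !inE => ci.
  case: (boolP (is_pivot hw c)) => pc; last by rewrite ci.
  case/existsP: pc => m /eqP em; apply/orP; right; apply/imsetP; exists m => //.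
  rewrite inE ltnNge; apply/negP => im.
  by have := piv_le hw im; rewrite em; lia.
have c1 := subset_leq_card sub.
rewrite card_lt in c1; last by apply: ltnW.
have c2 : (#|P| <= i)%N.
  by apply: leq_trans (leq_imset_card _ _) _; rewrite card_lt // ltnW.
have c3 := cardsU S P.
have pivi : (pivot_of hw i : nat) = (nth 0%N w i).-1 by [].
have : (1 < #|S|)%N by lia.
case/card_gt1P=> a [b [aS bS ab]].
move: aS bS; rewrite !inE => /andP[ai na] /andP[bi nb].
by exists a, b.
Qed.

Theorem proposition6p1 (F : closedFieldType) (hF : [pchar F]%R =i pred0)
  (d N : nat) (w : seq nat) (hd : (1 <= d)%N) (hdN : (d < N)%N)
  (hw : in_IdN d N w) (hne : w <> iota 1 d) :
  T_spherical F d N w <->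
  (wbar w = [:: Nbar w] \/
   ((2 <= dbar w)%N /\ wbar w = iota 2 (dbar w).-1 ++ [:: Nbar w])).
Proof.
split.
  move=> hT; apply: (cond_listed hw hne); apply: NNPP => nC.
  have [h1 h2] := notcond_gap hw hne nC.
  have hi : (d.-2 < d)%N by lia.
  have hj : (d.-1 < d)%N by lia.
  pose i : 'I_d := Ordinal hi; pose j : 'I_d := Ordinal hj.
  have [a [b [ab na nb ai bi]]] := @two_nonpiv d N w hw i h1 erefl h2.
  have hij : (i < j)%N by rewrite /=; lia.
  exact: (neg_spherical hij ab na nb ai bi hT).
move=> hl; have hC := listed_cond hw hne hl.
apply: (pos_spherical (p := red_p w) hw hdN (red_lt hw hne) (red_low hw) hC (cond_L hw hne hC) hF).
Qed.
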